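(* In the graph process described in the context, for every $i\in\{1,\ldots,q\}$, $|E_H^{(i)}|\le|E_H^{(i-1)}|+1$. Consequently $|E_H^{(q)}|\le q$.
   Context: Fix integers $n\ge1$, $h\ge2$, a real $\delta\in(0,1)$ with $\delta n^{1/(h-1)}>3$, and $S=\{1,\ldots,\lfloor\delta n\rfloor\}\subseteq[n]$. Let $(a_1,b_1),\ldots,(a_q,b_q)$ be a sequence of unordered pairs of distinct points of $[n]$, no pair repeated. All graphs are unweighted undirected on vertex set $[n]$; $d_G$ is the shortest-path (edge-count) distance ($\infty$ if disconnected), $\deg_G$ the degree. Graph process: $E_G^{(0)}=\{(u,v): u,v\in[n]\setminus S, u\ne v\}$, $E_H^{(0)}=\emptyset$, $G^{(i)}=([n],E_G^{(i)})$, $H^{(i)}=([n],E_H^{(i)})$. For $i=1,\ldots,q$: if $d_{G^{(i-1)}}(a_i,b_i)\le h$, choose a shortest $a_i$-$b_i$ path $P_i$ in $G^{(i-1)}$, set $E_H^{(i)}=E_H^{(i-1)}\cup\{\text{edges of }P_i\}$ and $E_G^{(i)}=E_G^{(i-1)}\setminus\{(u,v)\in E_G^{(i-1)}\setminus E_H^{(i)}: \deg_{H^{(i)}}(u)\ge\delta n^{1/(h-1)}-2\text{ or }\deg_{H^{(i)}}(v)\ge\delta n^{1/(h-1)}-2\}$; otherwise set $E_H^{(i)}=E_H^{(i-1)}$, $E_G^{(i)}=E_G^{(i-1)}$. *)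

(* Defs.v *)
From mathcomp Require Import all_boot.
From Stdlib Require Import Reals.
Set Implicit Arguments. Unset Strict Implicit. Unset Printing Implicit Defensive.

(* Vertices [n] are modelled by 'I_n (vertex v : 'I_n stands for v+1 in [n]).
   An (unordered) edge is a 2-element set of vertices; an edge set is a
   {set {set 'I_n}}. *)

Definition adj n (E : {set {set 'I_n}}) (u v : 'I_n) : bool :=
  (u != v) && ([set u; v] \in E).

(* a walk from a to b: the vertex list a :: p, consecutive vertices adjacent;
   its length (number of edges) is size p *)
Definition walk n (E : {set {set 'I_n}}) (a b : 'I_n) (p : seq 'I_n) : bool :=
  path (adj E) a p && (last a p == b).

Definition dist_le n (E : {set {set 'I_n}}) (a b : 'I_n) (k : nat) : Prop :=
  exists p, walk E a b p /\ size p <= k.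

Definition is_shortest n (E : {set {set 'I_n}}) (a b : 'I_n) (p : seq 'I_n) : Prop :=
  walk E a b p /\ forall p', walk E a b p' -> size p <= size p'.

Definition path_edges n (a : 'I_n) (p : seq 'I_n) : {set {set 'I_n}} :=
  [set:: [seq [set x.1; x.2] | x <- zip (a :: p) p]].

Definition deg n (E : {set {set 'I_n}}) (v : 'I_n) : nat := #|[set e in E | v \in e]|.

Definition thr (delta : R) (n h : nat) : R :=
  Rmult delta (Rpower (INR n) (Rinv (Rminus (INR h) 1))).

(* S = {1,...,floor(delta n)}: vertex v (i.e. v+1 in [n]) is in S iff v+1 <= delta n *)
Definition inS (delta : R) n (v : 'I_n) : Prop := Rle (INR v.+1) (Rmult delta (INR n)).

Definition initial_G (delta : R) n (EG0 : {set {set 'I_n}}) : Prop :=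
  forall e : {set 'I_n}, e \in EG0 <-> (#|e| = 2 /\ forall v, v \in e -> ~ inS delta v).

(* one step of the process on the pair (a,b); the shortest path is an arbitrary choice *)
Definition process_step n h (delta : R)
    (EG EH EG' EH' : {set {set 'I_n}}) (a b : 'I_n) : Prop :=
  (dist_le EG a b h ->
     exists p, is_shortest EG a b p /\
       EH' = EH :|: path_edges a p /\
       (forall e, e \in EG' <->
          (e \in EG /\
           ~ (e \notin EH' /\
              exists v, v \in e /\ Rle (Rminus (thr delta n h) 2) (INR (deg EH' v))))))
  /\ (~ dist_le EG a b h -> EH' = EH /\ EG' = EG).

(* Main.v *)
Require Import Defs.
From mathcomp Require Import all_boot.
From Stdlib Require Import Reals.
From Stdlib Require Import Classical.
From mathcomp Require Import zify.
From Stdlib Require Import Lia.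
Set Implicit Arguments.

Lemma last_take_nth (T : Type) (a : T) (p : seq T) i :
  i <= size p -> last a (take i p) = nth a (a :: p) i.
Proof.
move=> hi; rewrite (last_nth a) size_take.
case: ltnP => hi'; last first.
  have -> : i = size p by apply/eqP; rewrite eqn_leq hi hi'.
  by rewrite take_size.
case: i hi hi' => [|k] //= hi hi'.
by rewrite nth_take.
Qed.

Lemma path_drop_nth (T : Type) (r : rel T) (a : T) (p : seq T) j :
  j <= size p -> path r a p -> path r (nth a (a :: p) j) (drop j p).
Proof.
move=> hj; rewrite -{1}(cat_take_drop j p) cat_path => /andP[_].
by rewrite last_take_nth.
Qed.

Lemma last_drop_nth (T : Type) (a : T) (p : seq T) j :
  j <= size p -> last (nth a (a :: p) j) (drop j p) = last a p.
Proof.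
move=> hj; rewrite -[in RHS](cat_take_drop j p) last_cat.
by rewrite last_take_nth.
Qed.

Lemma path_edgesP n (a : 'I_n) p e :
  reflect (exists2 j, j < size p & e = [set nth a (a::p) j; nth a (a::p) j.+1])
          (e \in path_edges a p).
Proof.
rewrite /path_edges inE.
apply: (iffP idP).
  elim: p a => [|x p IH] a //=.
  rewrite in_cons => /orP[/eqP->|/IH [j hj ->]]; first by exists 0.
  exists j.+1 => //=.
  by rewrite !(set_nth_default x a) //= ltnS ltnW.
case=> j; elim: p a j => [|x p IH] a j //= hj he.
rewrite in_cons; case: j hj he => [|j] hj he /=; first by rewrite he eqxx.
apply/orP; right.
rewrite ltnS in hj; simpl in he.
rewrite [nth a (x :: p) j](set_nth_default x a) in he; last by rewrite /= ltnS; apply: ltnW.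
rewrite [nth a p j](set_nth_default x a) in he; last exact: hj.
exact: (IH x j hj he).
Qed.

Lemma shortcut_eq n (E : {set {set 'I_n}}) a b p i j :
  walk E a b p -> i < j -> j <= size p ->
  nth a (a :: p) i = nth a (a :: p) j ->
  exists p', walk E a b p' /\ size p' < size p.
Proof.
move=> /andP[hp /eqP hl] hij hj heq.
have hi : i <= size p by apply: leq_trans (ltnW hij) hj.
exists (take i p ++ drop j p); split.
  apply/andP; split.
    rewrite cat_path (take_path _ hp) /= last_take_nth // heq.
    exact: path_drop_nth.
  by rewrite last_cat last_take_nth // heq last_drop_nth // hl.
rewrite size_cat size_takel // size_drop; lia.
Qed.

Lemma shortcut_adj n (E : {set {set 'I_n}}) a b p i j :
  walk E a b p -> i.+1 < j -> j <= size p ->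
  adj E (nth a (a :: p) i) (nth a (a :: p) j) ->
  exists p', walk E a b p' /\ size p' < size p.
Proof.
move=> /andP[hp /eqP hl] hij hj hadj.
have hi : i <= size p by apply: leq_trans (ltnW (ltnW hij)) hj.
exists (take i p ++ nth a (a :: p) j :: drop j p); split.
  apply/andP; split.
    rewrite cat_path (take_path _ hp) /= last_take_nth // hadj /=.
    exact: path_drop_nth.
  by rewrite last_cat last_take_nth //= last_drop_nth // hl.
rewrite size_cat size_takel //= size_drop; lia.
Qed.

From Stdlib Require Import Lra.

Definition high n h (delta : R) (EH : {set {set 'I_n}}) (v : 'I_n) : Prop :=
  Rle (Rminus (thr delta n h) 2) (INR (deg EH v)).


Definition Inv n h (delta : R) (EG EH : {set {set 'I_n}}) : Prop :=
  (forall e v, e \in EG -> e \notin EH -> v \in e -> ~ high h delta EH v) /\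
  (forall u v : 'I_n, u != v -> ~ inS delta u -> ~ inS delta v ->
      [set u; v] \notin EG -> high h delta EH u \/ high h delta EH v) /\
  (forall e v, e \in EG -> v \in e -> ~ inS delta v).


Lemma high_mono n h delta (EH EH' : {set {set 'I_n}}) v :
  EH \subset EH' -> high h delta EH v -> high h delta EH' v.
Proof.
move=> sub hv; apply: Rle_trans hv _; apply: le_INR; apply/leP.
rewrite /deg; apply: subset_leq_card; apply/subsetP => e.
rewrite !inE => /andP[he hv']; rewrite hv' andbT.
exact: (subsetP sub).
Qed.

Lemma inv0 n h delta (EG0 : {set {set 'I_n}}) :
  initial_G delta EG0 -> Rlt 3 (thr delta n h) -> Inv h delta EG0 set0.
Proof.
move=> hG hthr; split; [|split].
- move=> e v _ _ _; rewrite /high /deg.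
  have -> : [set e0 in (set0 : {set {set 'I_n}}) | v \in e0] = set0.
    by apply/setP => x; rewrite !inE.
  rewrite cards0 /=; lra.
- move=> u v huv hu hv hn; exfalso; move/negP: hn; apply.
  apply/hG; split; first by rewrite cards2 huv.
  by move=> w /set2P [->|->].
- move=> e v he hv; have [H _] := hG e; have [_ H'] := H he; exact: H'.
Qed.

Lemma inv_step n h delta (EG EH EG' EH' : {set {set 'I_n}}) a b :
  Inv h delta EG EH -> process_step h delta EG EH EG' EH' a b ->
  Inv h delta EG' EH'.
Proof.
move=> [I1 [I2 I3]] [Hd Hnd].
case: (classic (dist_le EG a b h)) => hd; last first.
  by have [-> ->] := Hnd hd; split.
have [p [_ [hEH hEG']]] := Hd hd.
have sub : EH \subset EH' by rewrite hEH subsetUl.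
split; [|split].
- move=> e v he hne hv hh; have [_ H] := (hEG' e).1 he.
  by apply: H; split => //; exists v.
- move=> u v huv hu hv hn.
  case hin: ([set u; v] \in EG); last first.
    have [] := I2 u v huv hu hv (negbT hin) => hh; [left|right]; exact: high_mono hh.
  apply: NNPP => hno; move/negP: hn; apply; apply/hEG'; split => //.
  move=> [_ [w [hw hh]]]; apply: hno.
  by case/set2P: hw => ?; subst; [left|right].
- move=> e v he; have [he0 _] := (hEG' e).1 he; exact: I3.
Qed.

Lemma key_edges n h delta (EG EH : {set {set 'I_n}}) a b p e1 e2 :
  Inv h delta EG EH -> is_shortest EG a b p ->
  e1 \in path_edges a p -> e1 \notin EH ->
  e2 \in path_edges a p -> e2 \notin EH -> e1 = e2.
Proof.
move=> [I1 [I2 I3]] [hw hmin].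
have hp : path (adj EG) a p by case/andP: hw.
have edge : forall j, j < size p ->
    [set nth a (a :: p) j; nth a (a :: p) j.+1] \in EG.
  move=> j hj; have := (pathP a hp) j hj.
  by case/andP.
pose s k := nth a (a :: p) k.
suff main : forall j1 j2, j1 < j2 -> j2 < size p ->
    [set s j1; s j1.+1] \notin EH -> [set s j2; s j2.+1] \notin EH -> False.
  move=> /path_edgesP [j1 hj1 ->] hn1 /path_edgesP [j2 hj2 ->] hn2.
  case: (ltngtP j1 j2) => hlt.
  - by exfalso; exact: (main j1 j2).
  - by exfalso; exact: (main j2 j1).
  - by rewrite hlt.
move=> j1 j2 hlt hj2 hn1 hn2.
have hj1 : j1 < size p by apply: ltn_trans hj2.
have e1G := edge j1 hj1; have e2G := edge j2 hj2.
have lu : ~ high h delta EH (s j1) by apply: (I1 _ _ e1G hn1); rewrite !inE eqxx.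
have lv : ~ high h delta EH (s j2.+1) by apply: (I1 _ _ e2G hn2); rewrite !inE eqxx orbT.
have su : ~ inS delta (s j1) by apply: (I3 _ _ e1G); rewrite !inE eqxx.
have sv : ~ inS delta (s j2.+1) by apply: (I3 _ _ e2G); rewrite !inE eqxx orbT.
have huv : s j1 != s j2.+1.
  apply/negP => /eqP heq.
  have [p' [hw' hs']] := @shortcut_eq _ EG a b p j1 j2.+1 hw (ltn_trans hlt (ltnSn j2)) hj2 heq.
  by have := hmin p' hw'; rewrite leqNgt hs'.
case hin: ([set s j1; s j2.+1] \in EG).
  have hadj : adj EG (s j1) (s j2.+1) by rewrite /adj huv hin.
  have [p' [hw' hs']] := @shortcut_adj _ EG a b p j1 j2.+1 hw (hlt : j1.+1 < j2.+1) hj2 hadj.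
  by have := hmin p' hw'; rewrite leqNgt hs'.
by case: (I2 _ _ huv su sv (negbT hin)).
Qed.

Lemma card_step n h delta (EG EH : {set {set 'I_n}}) a b p :
  Inv h delta EG EH -> is_shortest EG a b p ->
  #|EH :|: path_edges a p| <= #|EH| + 1.
Proof.
move=> hI hs.
have -> : EH :|: path_edges a p = EH :|: (path_edges a p :\: EH).
  apply/setP => x; rewrite !inE; by case: (x \in EH).
apply: leq_trans (leq_card_setU _ _).1 _; rewrite leq_add2l.
apply/card_le1_eqP => x y; rewrite !in_setD => /andP[hx1 hx2] /andP[hy1 hy2].
symmetry; exact: (key_edges hI hs hx2 hx1 hy2 hy1).
Qed.

Unset Implicit Arguments.

Theorem mainTheorem8 (n h q : nat) (delta : R) (pa pb : nat -> 'I_n)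
    (EG EH : nat -> {set {set 'I_n}}) :
  1 <= n -> 2 <= h -> Rlt 0 delta -> Rlt delta 1 -> Rlt 3 (thr delta n h) ->
  (forall i, 1 <= i <= q -> pa i != pb i) ->
  (forall i j, 1 <= i <= q -> 1 <= j <= q -> i != j ->
     [set pa i; pb i] != [set pa j; pb j]) ->
  initial_G delta (EG 0) -> EH 0 = set0 ->
  (forall i, 1 <= i <= q ->
     process_step h delta (EG i.-1) (EH i.-1) (EG i) (EH i) (pa i) (pb i)) ->
  (forall i, 1 <= i <= q -> #|EH i| <= #|EH i.-1| + 1) /\ #|EH q| <= q.
Proof.
move=> _ _ _ _ hthr _ _ hG0 hH0 hstep.
have inv : forall i, i <= q -> Inv h delta (EG i) (EH i).
  elim=> [|i IH] hi; first by rewrite hH0; exact: inv0.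
  apply: (inv_step (IH (ltnW hi))).
  exact: (hstep i.+1).
have A : forall i, 1 <= i <= q -> #|EH i| <= #|EH i.-1| + 1.
  move=> i hi; have [Hd Hnd] := hstep i hi.
  case: (classic (dist_le (EG i.-1) (pa i) (pb i) h)) => hd.
    have [p [hs [-> _]]] := Hd hd.
    apply: (card_step _ hs); apply: inv.
    case/andP: hi => _ hi; apply: leq_trans hi; exact: leq_pred.
  by have [-> _] := Hnd hd; rewrite leq_addr.
split => //.
have B : forall i, i <= q -> #|EH i| <= i.
  elim=> [|i IH] hi; first by rewrite hH0 cards0.
  apply: leq_trans (A i.+1 _) _; first by rewrite hi.
  by rewrite addn1 ltnS; apply: IH; apply: ltnW.
exact: B.
Qed.
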